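(* For every integer $n\ge1$, $|A_n|\le 0.21\,(3/4)^n$ and $|B_n|\le 0.85\,(3/4)^n$.
   Context: Let $x_0=-\tfrac{770766}{323285}$ and let $a_0=-x_0/10$, $a_1=-1/6$, $a_2=\tfrac{19949}{321055}$, $a_3=0$, $a_n=-\tfrac{6}{(n+5)(n-2)}\sum_{k=0}^{n-4}a_ka_{n-4-k}$ for $4\le n\le 17$. Define $A_0=1$, $A_1=A_2=A_3=0$, and $A_n=-\tfrac{12}{n(n+7)}\sum_{k=0}^{\min\{n-4,17\}}a_kA_{n-4-k}$ for $n\ge4$; define $B_0=1$, $B_1=B_2=B_3=B_7=0$, and $B_n=-\tfrac{12}{n(n-7)}\sum_{k=0}^{\min\{n-4,17\}}a_kB_{n-4-k}$ for $n\ge4$, $n\ne7$. *)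

(* Defs.v *)
From mathcomp Require Import all_boot all_order all_algebra.
Set Implicit Arguments. Unset Strict Implicit. Unset Printing Implicit Defensive.
Import Order.TTheory GRing.Theory Num.Theory.
Local Open Scope ring_scope.

(* Course-of-values construction: [hist step n] = [:: x_0; ...; x_{n-1}]
   where x_m = step [:: x_0; ...; x_{m-1}] m. *)
Fixpoint hist (step : seq rat -> nat -> rat) (n : nat) : seq rat :=
  match n with
  | 0 => [::]
  | m.+1 => let s := hist step m in rcons s (step s m)
  end.

Definition seq_of (step : seq rat -> nat -> rat) (n : nat) : rat :=
  nth 0 (hist step n.+1) n.

Definition x0 : rat := - (770766%:R / 323285%:R).

Definition a_step (s : seq rat) (n : nat) : rat :=
  match n with
  | 0 => - x0 / 10%:R
  | 1 => - (1 / 6%:R)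
  | 2 => 19949%:R / 321055%:R
  | 3 => 0
  | _ => - (6%:R / ((n%:R + 5%:R) * (n%:R - 2%:R))) *
         \sum_(k < (n - 3)%N) s`_k * s`_(n - 4 - k)
  end.

Definition a (n : nat) : rat := seq_of a_step n.

Definition A_step (s : seq rat) (n : nat) : rat :=
  match n with
  | 0 => 1
  | 1 | 2 | 3 => 0
  | _ => - (12%:R / (n%:R * (n%:R + 7%:R))) *
         \sum_(k < (minn (n - 4) 17).+1) a k * s`_(n - 4 - k)
  end.

Definition A (n : nat) : rat := seq_of A_step n.

Definition B_step (s : seq rat) (n : nat) : rat :=
  match n with
  | 0 => 1
  | 1 | 2 | 3 | 7 => 0
  | _ => - (12%:R / (n%:R * (n%:R - 7%:R))) *
         \sum_(k < (minn (n - 4) 17).+1) a k * s`_(n - 4 - k)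
  end.

Definition B (n : nat) : rat := seq_of B_step n.

(* Main.v *)
From Stdlib Require Import ZArith QArith Qabs.
Require Import Defs.
From mathcomp Require Import all_boot all_order all_algebra.
From mathcomp Require Import zify ssrZ ring lra.
Import Order.TTheory GRing.Theory Num.Theory.
Local Open Scope ring_scope.


Definition fZ (z : Z) : rat := (int_of_Z z)%:~R.

Lemma fZD x y : fZ (Z.add x y) = fZ x + fZ y.
Proof. by rewrite /fZ (rmorphD int_of_Z x y : int_of_Z (x+y)%Z = _) rmorphD. Qed.
Lemma fZM x y : fZ (Z.mul x y) = fZ x * fZ y.
Proof. by rewrite /fZ (rmorphM int_of_Z x y : int_of_Z (x*y)%Z = _) rmorphM. Qed.
Lemma fZN x : fZ (Z.opp x) = - fZ x.
Proof. by rewrite /fZ (rmorphN int_of_Z x : int_of_Z (- x)%Z = _) rmorphN. Qed.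
Lemma fZpos p : 0 < fZ (Zpos p).
Proof. rewrite /fZ /= ltr0n; lia. Qed.
Lemma fZnat n : fZ (Z.of_nat n) = n%:R.
Proof. by rewrite /fZ (_ : Z.of_nat n = Z_of_int (Posz n)) // Z_of_intK. Qed.
Lemma fZ_ge0 z : Z.le Z0 z -> 0 <= fZ z.
Proof. case: z => //= p _; rewrite /fZ /=; exact: ler0n. Qed.
Lemma fZ_le x y : Z.le x y -> fZ x <= fZ y.
Proof. move=> h; rewrite -subr_ge0 -fZN -fZD; apply: fZ_ge0; lia. Qed.
Lemma fZabs z : `|fZ z| = fZ (Z.abs z).
Proof.
case: z => [|p|p].
- by rewrite /fZ /= normr0.
- by rewrite /= ger0_norm // ltW // fZpos.
- rewrite (_ : Zneg p = Z.opp (Zpos p)) // fZN normrN ger0_norm // ltW // fZpos.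
Qed.

Definition phi (x : Q) : rat := fZ (Qnum x) / fZ (Zpos (Qden x)).

Lemma fZpos_neq0 p : fZ (Zpos p) != 0.
Proof. by rewrite gt_eqF // fZpos. Qed.

Lemma phiM x y : phi (Qmult x y) = phi x * phi y.
Proof.
case: x y => [nx dx] [ny dy]; rewrite /phi /= (_ : Zpos (dx*dy) = Z.mul (Zpos dx) (Zpos dy)) //.
by rewrite !fZM invfM mulrACA.
Qed.

Lemma phiD x y : phi (Qplus x y) = phi x + phi y.
Proof.
case: x y => [nx dx] [ny dy]; rewrite /phi /= (_ : Zpos (dx*dy) = Z.mul (Zpos dx) (Zpos dy)) //.
rewrite fZD !fZM.
have h1 := fZpos_neq0 dx; have h2 := fZpos_neq0 dy.
by field; apply/andP.
Qed.

Lemma phiN x : phi (Qopp x) = - phi x.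
Proof. by case: x => [n d]; rewrite /phi /= fZN mulNr. Qed.

Lemma phiV x : phi (Qinv x) = (phi x)^-1.
Proof.
case: x => [[|p|p] d]; rewrite /phi /=.
- by rewrite /fZ /= !mul0r invr0.
- by rewrite invf_div.
- rewrite (_ : Zneg p = Z.opp (Zpos p)) // (_ : Zneg d = Z.opp (Zpos d)) // !fZN.
  by rewrite invf_div mulNr invrN mulrN.
Qed.

Lemma phiE x y : Qeq x y -> phi x = phi y.
Proof.
case: x y => [nx dx] [ny dy]; rewrite /Qeq /phi /= => h.
have h1 := fZpos_neq0 dx; have h2 := fZpos_neq0 dy.
apply/eqP; rewrite eqr_div // -!fZM h //.
Qed.

Lemma phiR x : phi (Qred x) = phi x.
Proof. exact/phiE/Qred_correct. Qed.

Lemma phi_le x y : Qle_bool x y = true -> phi x <= phi y.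
Proof.
case: x y => [nx dx] [ny dy]; rewrite /phi /= => /Qle_bool_iff; rewrite /Qle /= => h.
rewrite ler_pdivrMr ?fZpos // mulrAC ler_pdivlMr ?fZpos // -!fZM.
exact: fZ_le.
Qed.

Lemma phi_abs x : `|phi x| = phi (Qabs x).
Proof.
case: x => [n d]; rewrite /phi /= normrM normfV fZabs; congr (_ / _).
by rewrite ger0_norm // ltW // fZpos.
Qed.

Definition natQ (n : nat) : Q := Qmake (Z.of_nat n) 1.
Lemma phi_nat n : phi (natQ n) = n%:R.
Proof. by rewrite /phi /natQ fZnat /fZ /= divr1. Qed.
Lemma phi_pos p : phi (Qmake (Zpos p) 1) = (Pos.to_nat p)%:R.
Proof. by rewrite /phi /fZ /= divr1. Qed.
Definition Q0 : Q := natQ 0.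
Definition Q1 : Q := natQ 1.
Lemma phi0 : phi Q0 = 0.
Proof. by rewrite /Q0 phi_nat. Qed.
Lemma phi1 : phi Q1 = 1.
Proof. by rewrite /Q1 phi_nat. Qed.


Fixpoint qhist (step : seq Q -> nat -> Q) (n : nat) : seq Q :=
  match n with
  | 0%N => [::]
  | m.+1 => let s := qhist step m in rcons s (step s m)
  end.

Lemma nth_phi t k : nth 0 (map phi t) k = phi (nth Q0 t k).
Proof. elim: t k => [|x t IH] [|k] //=; by rewrite phi0. Qed.

Lemma hist_phi st qt : (forall t n, st (map phi t) n = phi (qt t n)) ->
  forall n, hist st n = map phi (qhist qt n).
Proof. move=> H; elim=> [|n IH] //=; by rewrite IH H map_rcons. Qed.

Lemma seq_of_phi st qt : (forall t n, st (map phi t) n = phi (qt t n)) ->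
  forall n, seq_of st n = phi (nth Q0 (qhist qt n.+1) n).
Proof. by move=> H n; rewrite /seq_of (@hist_phi st qt H) nth_phi. Qed.

Lemma size_hist st n : size (hist st n) = n.
Proof. by elim: n => //= n IH; rewrite size_rcons IH. Qed.

Lemma nth_hist st m n : (m < n)%N -> nth 0 (hist st n) m = seq_of st m.
Proof.
elim: n => // n IH; rewrite ltnS leq_eqVlt => /orP [/eqP ->|h].
  by [].
by rewrite /= nth_rcons size_hist h IH.
Qed.

Lemma seq_of_step st n : seq_of st n = st (hist st n) n.
Proof. by rewrite /seq_of /= nth_rcons size_hist ltnn eqxx. Qed.

Fixpoint qsum (m : nat) (G : nat -> Q) : Q :=
  match m with 0%N => Q0 | m'.+1 => Qred (Qplus (qsum m' G) (G m')) end.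

Lemma phi_sum m G : phi (qsum m G) = \sum_(k < m) phi (G k).
Proof.
elim: m => [|m IH]; first by rewrite big_ord0 -phi0.
change (qsum m.+1 G) with (Qred (Qplus (qsum m G) (G m))).
by rewrite phiR phiD IH big_ord_recr.
Qed.

Fixpoint qpow (x : Q) (n : nat) : Q :=
  match n with 0%N => Q1 | m.+1 => Qred (Qmult x (qpow x m)) end.

Lemma phi_pow x n : phi (qpow x n) = phi x ^+ n.
Proof.
elim: n => [|n IH]; first by rewrite expr0 -phi1.
change (qpow x n.+1) with (Qred (Qmult x (qpow x n))).
by rewrite phiR phiM IH exprS.
Qed.

Lemma phi_div x y : phi (Qdiv x y) = phi x / phi y.
Proof. by rewrite /Qdiv phiM phiV. Qed.

Definition qx0 : Q := Qopp (Qdiv (Qmake (Zpos 770766) 1) (Qmake (Zpos 323285) 1)).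

Definition qa_step (t : seq Q) (n : nat) : Q :=
  match n with
  | 0%N => Qdiv (Qopp qx0) (natQ 10)
  | 1%N => Qopp (Qdiv Q1 (natQ 6))
  | 2%N => Qdiv (Qmake (Zpos 19949) 1) (Qmake (Zpos 321055) 1)
  | 3%N => Q0
  | _ => Qred (Qmult (Qopp (Qdiv (natQ 6) (Qmult (Qplus (natQ n) (natQ 5)) (Qplus (natQ n) (Qopp (natQ 2))))))
         (qsum (n - 3) (fun k => Qmult (nth Q0 t k) (nth Q0 t (n - 4 - k)))))
  end.

Ltac phis := rewrite ?(phiR, phiM, phiN, phiV, phi_div, phiD, phi_nat, phi_sum, phi_pow, phi_abs).

Lemma e1 : Pos.to_nat 770766%positive = 770766%N.
Proof. apply/eqP; vm_compute; reflexivity. Qed.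
Lemma c1 : phi (Qmake (Zpos 770766) 1) = 770766%:R.
Proof. by rewrite phi_pos e1. Qed.
Lemma e2 : Pos.to_nat 323285%positive = 323285%N.
Proof. apply/eqP; vm_compute; reflexivity. Qed.
Lemma c2 : phi (Qmake (Zpos 323285) 1) = 323285%:R.
Proof. by rewrite phi_pos e2. Qed.
Lemma e3 : Pos.to_nat 19949%positive = 19949%N.
Proof. apply/eqP; vm_compute; reflexivity. Qed.
Lemma c3 : phi (Qmake (Zpos 19949) 1) = 19949%:R.
Proof. by rewrite phi_pos e3. Qed.
Lemma e4 : Pos.to_nat 321055%positive = 321055%N.
Proof. apply/eqP; vm_compute; reflexivity. Qed.
Lemma c4 : phi (Qmake (Zpos 321055) 1) = 321055%:R.
Proof. by rewrite phi_pos e4. Qed.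

Lemma a_step_phi t n : a_step (map phi t) n = phi (qa_step t n).
Proof.
case: n => [|[|[|[|n]]]]; cbv beta iota delta [a_step qa_step].
- by rewrite /x0 phi_div phiN phi_nat /qx0 phiN phi_div c1 c2.
- by phis.
- by rewrite phi_div c3 c4.
- by rewrite phi0.
- phis; congr (_ * _); apply: eq_bigr => k _; by rewrite phiM !nth_phi.
Qed.

Definition qa (k : nat) : Q := nth Q0 (qhist qa_step k.+1) k.
Lemma a_phi k : a k = phi (qa k).
Proof. exact: (@seq_of_phi _ _ a_step_phi). Qed.

Definition qA_step (t : seq Q) (n : nat) : Q :=
  match n with
  | 0%N => Q1
  | 1%N | 2%N | 3%N => Q0
  | _ => Qred (Qmult (Qopp (Qdiv (natQ 12) (Qmult (natQ n) (Qplus (natQ n) (natQ 7)))))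
         (qsum (minn (n - 4) 17).+1 (fun k => Qmult (qa k) (nth Q0 t (n - 4 - k)))))
  end.

Definition qB_step (t : seq Q) (n : nat) : Q :=
  match n with
  | 0%N => Q1
  | 1%N | 2%N | 3%N | 7%N => Q0
  | _ => Qred (Qmult (Qopp (Qdiv (natQ 12) (Qmult (natQ n) (Qplus (natQ n) (Qopp (natQ 7))))))
         (qsum (minn (n - 4) 17).+1 (fun k => Qmult (qa k) (nth Q0 t (n - 4 - k)))))
  end.

Lemma A_step_phi t n : A_step (map phi t) n = phi (qA_step t n).
Proof.
case: n => [|[|[|[|n]]]]; cbv beta iota delta [A_step qA_step]; rewrite ?phi0 ?phi1 //.
phis; congr (_ * _); apply: eq_bigr => k _; by rewrite phiM nth_phi a_phi.
Qed.

Lemma B_step_phi t n : B_step (map phi t) n = phi (qB_step t n).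
Proof.
case: n => [|[|[|[|[|[|[|[|n]]]]]]]]; cbv beta iota delta [B_step qB_step]; rewrite ?phi0 ?phi1 //;
phis; congr (_ * _); apply: eq_bigr => k _; by rewrite phiM nth_phi a_phi.
Qed.

Definition qA (n : nat) : Q := nth Q0 (qhist qA_step n.+1) n.
Definition qB (n : nat) : Q := nth Q0 (qhist qB_step n.+1) n.
Lemma A_phi n : A n = phi (qA n).
Proof. exact: (@seq_of_phi _ _ A_step_phi). Qed.
Lemma B_phi n : B n = phi (qB n).
Proof. exact: (@seq_of_phi _ _ B_step_phi). Qed.

Definition qr : Q := Qdiv (natQ 3) (natQ 4).
Definition checkA (n : nat) : bool :=
  Qle_bool (Qabs (qA n)) (Qmult (Qdiv (natQ 21) (natQ 100)) (qpow qr n)).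
Definition checkB (n : nat) : bool :=
  Qle_bool (Qabs (qB n)) (Qmult (Qdiv (natQ 85) (natQ 100)) (qpow qr n)).

Lemma checks : all (fun n => checkA n && checkB n) (iota 1 21).
Proof. vm_compute. reflexivity. Qed.

Definition qK : Q := qsum 18 (fun k => Qmult (Qabs (qa k)) (qpow (Qdiv (natQ 4) (natQ 3)) (k + 4))).
Lemma checkK : Qle_bool qK (natQ 3).
Proof. vm_compute. reflexivity. Qed.


Definition r : rat := 3%:R / 4%:R.

Lemma Kbound : \sum_(k < 18) `|a k| * (4%:R / 3%:R) ^+ (k + 4) <= 3%:R.
Proof.
have := @phi_le _ _ checkK; rewrite /qK phi_sum phi_nat.
under eq_bigr => k _ do rewrite phiM phi_pow phi_div !phi_nat -phi_abs -a_phi.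
done.
Qed.

Lemma r_pow n k : (k < 18)%N -> (22 <= n)%N ->
  r ^+ (n - 4 - k) = r ^+ n * (4%:R / 3%:R) ^+ (k + 4).
Proof.
move=> hk hn.
have e : n = ((n - 4 - k) + (k + 4))%N by lia.
rewrite [in RHS]e exprD -mulrA -invf_div exprVn mulfV ?mulr1 //.
by rewrite expf_neq0 // /r mulf_neq0 // ?invr_eq0 pnatr_eq0.
Qed.

Lemma bound_gen (X F : nat -> rat) (c : rat) :
  0 <= c ->
  (forall n, (1 <= n)%N -> (n < 22)%N -> `|X n| <= c * r ^+ n) ->
  (forall n, (22 <= n)%N -> `|X n| <= F n * \sum_(k < 18) `|a k| * `|X (n - 4 - k)%N|) ->
  (forall n, (22 <= n)%N -> 0 <= F n /\ F n * 3%:R <= 1) ->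
  forall n, (1 <= n)%N -> `|X n| <= c * r ^+ n.
Proof.
move=> hc hsmall hrec hF n; elim/ltn_ind: n => n IH hn.
case: (ltnP n 22) => h; first exact: hsmall.
have [hF0 hF3] := hF n h.
have hr0 : 0 <= r ^+ n by rewrite exprn_ge0 // /r divr_ge0.
apply: (le_trans (hrec n h)).
apply: (@le_trans _ _ (F n * (c * r ^+ n * \sum_(k < 18) `|a k| * (4%:R / 3%:R) ^+ (k + 4)))).
  apply: ler_wpM2l => //; rewrite mulr_sumr; apply: ler_sum => k _.
  rewrite mulrCA -mulrA -r_pow //; apply: ler_wpM2l => //.
  by apply: IH; have := ltn_ord k; lia.
apply: (@le_trans _ _ (F n * (c * r ^+ n * 3%:R))).
  apply: ler_wpM2l => //; apply: ler_wpM2l; [exact: mulr_ge0|exact: Kbound].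
rewrite mulrCA -[X in _ <= X]mulr1; apply: ler_wpM2l => //.
exact: mulr_ge0.
Qed.


Lemma A_rec n : (22 <= n)%N ->
  A n = - (12%:R / (n%:R * (n%:R + 7%:R))) * \sum_(k < 18) a k * A (n - 4 - k)%N.
Proof.
case: n => [|[|[|[|m]]]] // h.
rewrite {1}/A seq_of_step; cbv beta iota delta [A_step].
have -> : minn (m.+4 - 4) 17 = 17%N by lia.
congr (_ * _); apply: eq_bigr => k _; rewrite nth_hist //; have := ltn_ord k; lia.
Qed.

Lemma B_rec n : (22 <= n)%N ->
  B n = - (12%:R / (n%:R * (n%:R - 7%:R))) * \sum_(k < 18) a k * B (n - 4 - k)%N.
Proof.
case: n => [|[|[|[|[|[|[|[|m]]]]]]]] // h.
rewrite {1}/B seq_of_step; cbv beta iota delta [B_step].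
have -> : minn (m.+4.+4 - 4) 17 = 17%N by lia.
congr (_ * _); apply: eq_bigr => k _; rewrite nth_hist //; have := ltn_ord k; lia.
Qed.

Lemma small n : (1 <= n)%N -> (n < 22)%N ->
  `|A n| <= (21%:R / 100%:R) * r ^+ n /\ `|B n| <= (85%:R / 100%:R) * r ^+ n.
Proof.
move=> h1 h2; move/allP: checks => /(_ n); rewrite mem_iota => H.
have /andP [hA hB] : checkA n && checkB n by apply: H; lia.
split.
- have := @phi_le _ _ hA; rewrite -phi_abs -A_phi phiM phi_div !phi_nat phi_pow /qr phi_div !phi_nat.
  done.
- have := @phi_le _ _ hB; rewrite -phi_abs -B_phi phiM phi_div !phi_nat phi_pow /qr phi_div !phi_nat.
  done.
Qed.


Theorem lemma6p5 : forall n : nat, (1 <= n)%N ->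
  `|A n| <= (21%:R / 100%:R) * (3%:R / 4%:R) ^+ n /\
  `|B n| <= (85%:R / 100%:R) * (3%:R / 4%:R) ^+ n.
Proof.
move=> n hn; split.
- apply: (@bound_gen A (fun n => 12%:R / (n%:R * (n%:R + 7%:R))) _ _ _ _ _ n hn).
  + by rewrite divr_ge0.
  + by move=> m h1 h2; case: (@small m h1 h2).
  + move=> m hm.
    have hp : 0 <= 12%:R / (m%:R * (m%:R + 7%:R)) :> rat by rewrite divr_ge0 // mulr_ge0 // addr_ge0.
    rewrite A_rec // normrM normrN (ger0_norm hp).
    apply: ler_wpM2l => //.
    apply: (le_trans (ler_norm_sum _ _ _)); apply: ler_sum => k _.
    by rewrite normrM.
  + move=> m hm; split; first by rewrite divr_ge0 // mulr_ge0 // addr_ge0.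
    rewrite mulrAC ler_pdivrMr; last by rewrite -natrD -natrM ltr0n; lia.
    by rewrite mul1r -natrD -!natrM ler_nat; nia.
- apply: (@bound_gen B (fun n => 12%:R / (n%:R * (n%:R - 7%:R))) _ _ _ _ _ n hn).
  + by rewrite divr_ge0.
  + by move=> m h1 h2; case: (@small m h1 h2).
  + move=> m hm; have h7 : 7%:R <= m%:R :> rat by rewrite ler_nat; lia.
    have hp : 0 <= 12%:R / (m%:R * (m%:R - 7%:R)) :> rat by rewrite divr_ge0 // mulr_ge0 // subr_ge0.
    rewrite B_rec // normrM normrN (ger0_norm hp).
    apply: ler_wpM2l => //.
    apply: (le_trans (ler_norm_sum _ _ _)); apply: ler_sum => k _.
    by rewrite normrM.
  + move=> m hm; rewrite -natrB; last by lia.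
    split; first by rewrite divr_ge0 // mulr_ge0.
    rewrite mulrAC ler_pdivrMr; last by rewrite -natrM ltr0n; lia.
    by rewrite mul1r -!natrM ler_nat; nia.
Qed.
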